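(* For every $m\ge1$ and every probability mass function $(g_k)_{k\in\mathbb Z}$ of a sum of $m$ independent Bernoulli random variables (extended by $0$ outside $\{0,\ldots,m\}$), the following hold for all $k\in\mathbb Z$: $$g_k^2g_{k+1}-2g_{k+1}^2g_{k-1}+g_{k+2}g_kg_{k-1}\ge0,$$ $$g_k^3-g_{k-1}g_kg_{k+1}-g_{k-1}^2g_{k+2}+g_{k-2}g_kg_{k+2}\ge0,$$ $$g_k^3-g_{k-1}g_kg_{k+1}-g_{k+1}^2g_{k-2}+g_{k-2}g_kg_{k+2}\ge0,$$ $$2g_k^3-3g_{k-1}g_kg_{k+1}+g_{k-1}^2g_{k+2}\ge0,$$ $$2g_k^3-3g_{k-1}g_kg_{k+1}+g_{k+1}^2g_{k-2}\ge0,$$ $$2g_k^2g_{k-2}-3g_{k-2}g_{k-1}g_{k+1}+g_{k+1}g_kg_{k-3}\ge0.$$ *)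

(* Defs.v *)
From HB Require Import structures.
From mathcomp Require Import all_boot all_order all_algebra.
Set Implicit Arguments. Unset Strict Implicit. Unset Printing Implicit Defensive.
Import Order.TTheory GRing.Theory Num.Theory.
Local Open Scope ring_scope.

(* Probability mass function of the sum of m independent Bernoulli(p i)
   random variables, computed on the product space {0,1}^m:
   poibin p k = P(X_0 + ... + X_{m-1} = k)
              = sum over outcomes x with #{i | x i} = k of
                prod_i (if x i then p i else 1 - p i).
   Indexed by k : int; automatically 0 outside {0,...,m}. *)
Definition poibin (R : realFieldType) (m : nat) (p : 'I_m -> R) (k : int) : R :=
  \sum_(x : {ffun 'I_m -> bool} | (#|[set i | x i]| : int) == k)
     \prod_(i < m) (if x i then p i else 1 - p i).

(* Main.v *)
Require Import Defs.
From HB Require Import structures.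
From mathcomp Require Import all_boot all_order all_algebra.
From mathcomp Require Import ring lra zify.
Import Order.TTheory GRing.Theory Num.Theory.
Set Implicit Arguments. Unset Strict Implicit. Unset Printing Implicit Defensive.
Local Open Scope ring_scope.
From Stdlib Require Import FunctionalExtensionality.
Section PB.
Variable R : realFieldType.

Lemma card_set_rec (m : nat) (x : {ffun 'I_m.+1 -> bool}) :
  #|[set i | x i]| = (x ord0 + #|[set j : 'I_m | x (lift ord0 j)]|)%N.
Proof.
rewrite -!sum1_card big_mkcond [in RHS]big_mkcond /= big_ord_recl /=.
rewrite !inE; case: (x ord0) => /=; congr (_ + _)%N; apply: eq_bigr => i _; by rewrite !inE.
Qed.

Definition fcons (m : nat) (b : bool) (y : {ffun 'I_m -> bool}) : {ffun 'I_m.+1 -> bool} :=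
  [ffun i => if unlift ord0 i is Some j then y j else b].
Definition ftl (m : nat) (x : {ffun 'I_m.+1 -> bool}) : bool * {ffun 'I_m -> bool} :=
  (x ord0, [ffun j => x (lift ord0 j)]).

Lemma fconsK m : cancel (fun q : bool * {ffun 'I_m -> bool} => fcons q.1 q.2) (@ftl m).
Proof.
move=> [b y]; rewrite /ftl /fcons /= ffunE unlift_none; congr pair.
by apply/ffunP=> j; rewrite !ffunE liftK.
Qed.

Lemma ftlK m : cancel (@ftl m) (fun q => fcons q.1 q.2).
Proof.
move=> x; apply/ffunP=> i; rewrite /ftl /fcons /= ffunE.
case: unliftP => [j ->|->]; by rewrite ?ffunE.
Qed.

Lemma poibin_rec (m : nat) (p : 'I_m.+1 -> R) (k : int) :
  poibin p k = (1 - p ord0) * poibin (fun j => p (lift ord0 j)) k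
             + p ord0 * poibin (fun j => p (lift ord0 j)) (k - 1).
Proof.
rewrite /poibin big_mkcond /=.
rewrite (reindex (fun q : bool * {ffun 'I_m -> bool} => fcons q.1 q.2)) /=; last first.
  by exists (@ftl m) => x _; [apply: fconsK | apply: ftlK].
rewrite -(pair_bigA _ (fun b y => if (#|[set i | fcons b y i]| : int) == k
     then \prod_(i < m.+1) (if fcons b y i then p i else 1 - p i) else 0)) /= big_bool /=.
rewrite !big_distrr /= !(big_mkcond (fun y => _ == _)) /=.
rewrite addrC; congr (_ + _); apply: eq_bigr => y _.
- rewrite card_set_rec /fcons ffunE unlift_none /=.
  have -> : [set j | [ffun i => if unlift ord0 i is Some j then y j else false] (lift ord0 j)]
           = [set j | y j] by apply/setP=> j; rewrite !inE ffunE liftK.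
  rewrite big_ord_recl /= ffunE unlift_none.
  under eq_bigr do rewrite ffunE liftK.
  by rewrite add0n; case: ifP; rewrite ?mulr0.
- rewrite card_set_rec /fcons ffunE unlift_none /=.
  have -> : [set j | [ffun i => if unlift ord0 i is Some j then y j else true] (lift ord0 j)]
           = [set j | y j] by apply/setP=> j; rewrite !inE ffunE liftK.
  rewrite big_ord_recl /= ffunE unlift_none.
  under eq_bigr do rewrite ffunE liftK.
  have -> : ((1 + #|[set j | y j]|)%N%:Z == k) = (#|[set j | y j]|%:Z == k - 1).
    by rewrite PoszD addrC -subr_eq.
  by case: ifP; rewrite ?mulr0.
Qed.

Lemma poibin0 (p : 'I_0 -> R) (k : int) : poibin p k = if k == 0 then 1 else 0.
Proof.
have c0 : forall x : {ffun 'I_0 -> bool}, #|[set i | x i]| = 0%N.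
  by move=> x; apply/eqP; rewrite -leqn0; apply: leq_trans (max_card _) _; rewrite card_ord.
rewrite /poibin; under eq_bigl => x do rewrite c0.
under eq_bigr => x _ do rewrite big_ord0.
case: (k =P 0) => [->|nk].
  by rewrite (eq_bigl xpredT) // sumr_const card_ffun card_ord expn0.
rewrite big_pred0 // => x; apply/eqP => h; apply: nk; by rewrite -h.
Qed.
End PB.
Section Core.
Variable R : realFieldType.
Implicit Types (g : int -> R) (q p : R).

Definition delta (x : int) : R := if x == 0 then 1 else 0.
Definition step q p g (x : int) : R := q * g x + p * g (x - 1).

Definition Zprop g := forall x, g x = 0 ->
  (forall y, y <= x -> g y = 0) \/ (forall y, x <= y -> g y = 0).
Definition PF2 g := forall w x y z : int, w + z = x + y -> w < x -> w < y ->
  g w * g z <= g x * g y.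
Definition D3 g (a1 a2 a3 c1 c2 c3 : int) : R :=
  g (a1 - c1) * g (a2 - c2) * g (a3 - c3) - g (a1 - c1) * g (a2 - c3) * g (a3 - c2)
  - g (a1 - c2) * g (a2 - c1) * g (a3 - c3) + g (a1 - c2) * g (a2 - c3) * g (a3 - c1)
  + g (a1 - c3) * g (a2 - c1) * g (a3 - c2) - g (a1 - c3) * g (a2 - c2) * g (a3 - c1).
Definition PF3 g := forall a1 a2 a3 c1 c2 c3 : int, a1 < a2 -> a2 < a3 -> c1 < c2 -> c2 < c3 ->
  0 <= D3 g a1 a2 a3 c1 c2 c3.

Lemma pf3_inst g (H : PF3 g) (a1 a2 a3 c1 c2 c3 x11 x12 x13 x21 x22 x23 x31 x32 x33 : int) :
  a1 < a2 -> a2 < a3 -> c1 < c2 -> c2 < c3 ->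
  x11 = a1 - c1 -> x12 = a1 - c2 -> x13 = a1 - c3 ->
  x21 = a2 - c1 -> x22 = a2 - c2 -> x23 = a2 - c3 ->
  x31 = a3 - c1 -> x32 = a3 - c2 -> x33 = a3 - c3 ->
  0 <= g x11 * g x22 * g x33 - g x11 * g x23 * g x32
  - g x12 * g x21 * g x33 + g x12 * g x23 * g x31
  + g x13 * g x21 * g x32 - g x13 * g x22 * g x31.
Proof. by move=> h1 h2 h3 h4 -> -> -> -> -> -> -> -> ->; apply: H. Qed.

Lemma pf2_inst g (H : PF2 g) (w x y z : int) :
  w + z = x + y -> w < x -> w < y -> 0 <= g x * g y - g w * g z.
Proof. by move=> e h1 h2; rewrite subr_ge0; apply: H. Qed.

Lemma step_ge0 g q p : (forall x, 0 <= g x) -> 0 <= q -> 0 <= p ->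
  forall x, 0 <= step q p g x.
Proof. by move=> g0 hq hp x; rewrite /step addr_ge0 // mulr_ge0. Qed.

Lemma step_z g q p : (forall x, 0 <= g x) -> Zprop g -> 0 <= q -> 0 <= p ->
  Zprop (step q p g).
Proof.
move=> g0 hz hq hp x; rewrite /step => /eqP.
rewrite paddr_eq0 ?mulr_ge0 // => /andP[]; rewrite !mulf_eq0.
case/orP=> [/eqP q0|/eqP gx0]; case/orP=> [/eqP p0|/eqP gx1].
- by left=> y _; rewrite q0 p0 !mul0r addr0.
- case: (hz _ gx1) => h; [left|right] => y hy; rewrite q0 mul0r add0r h ?mulr0 //; lia.
- case: (hz _ gx0) => h; [left|right] => y hy; rewrite p0 mul0r addr0 h ?mulr0 //.
- case: (hz _ gx0) => h.
    by left=> y hy; rewrite !h ?mulr0 ?addr0 //; lia.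
  case: (hz _ gx1) => h'.
    have all0 : forall y, g y = 0.
      by move=> y; case: (lerP x y) => hh; [apply: h | apply: h']; lia.
    by left=> y _; rewrite !all0 !mulr0 addr0.
  by right=> y hy; rewrite !h' ?mulr0 ?addr0 //; lia.
Qed.

Lemma step_pf2 g q p : (forall x, 0 <= g x) -> PF2 g -> 0 <= q -> 0 <= p ->
  PF2 (step q p g).
Proof.
move=> g0 h hq hp w x y z e hx hy; rewrite /step.
have h1 := h w x y z e hx hy.
have h4 := h (w - 1) (x - 1) (y - 1) (z - 1) ltac:(lia) ltac:(lia) ltac:(lia).
have h2 := h (w - 1) (x - 1) y z ltac:(lia) ltac:(lia) ltac:(lia).
have h3 : g w * g (z - 1) <= g x * g (y - 1).
  case: (w =P y - 1) => ew.
    have -> : z - 1 = x by lia.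
    by rewrite ew mulrC.
  apply: h; lia.
have hqq : 0 <= q * q by rewrite mulr_ge0.
have hqp : 0 <= q * p by rewrite mulr_ge0.
have hpp : 0 <= p * p by rewrite mulr_ge0.
rewrite -subr_ge0 in h1; rewrite -subr_ge0 in h2; rewrite -subr_ge0 in h3; rewrite -subr_ge0 in h4.
have f1 := mulr_ge0 hqq h1; have f2 := mulr_ge0 hqp h2.
have f3 := mulr_ge0 hqp h3; have f4 := mulr_ge0 hpp h4.
lra.
Qed.

Lemma D3w g (H : PF3 g) a1 a2 a3 c1 c2 c3 : a1 <= a2 -> a2 <= a3 -> c1 < c2 -> c2 < c3 ->
  0 <= D3 g a1 a2 a3 c1 c2 c3.
Proof.
move=> h1 h2 h3 h4.
case: (a1 =P a2) => [<-|n1].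
  by have -> : D3 g a1 a1 a3 c1 c2 c3 = 0 by rewrite /D3; ring.
case: (a2 =P a3) => [<-|n2].
  by have -> : D3 g a1 a2 a2 c1 c2 c3 = 0 by rewrite /D3; ring.
apply: H => //; lia.
Qed.

Lemma step_D3 g q p a1 a2 a3 c1 c2 c3 :
  D3 (step q p g) a1 a2 a3 c1 c2 c3 =
    q ^+ 3 * D3 g a1 a2 a3 c1 c2 c3
  + q ^+ 2 * p * (D3 g (a1 - 1) a2 a3 c1 c2 c3 + D3 g a1 (a2 - 1) a3 c1 c2 c3
                  + D3 g a1 a2 (a3 - 1) c1 c2 c3)
  + q * p ^+ 2 * (D3 g (a1 - 1) (a2 - 1) a3 c1 c2 c3 + D3 g (a1 - 1) a2 (a3 - 1) c1 c2 c3
                  + D3 g a1 (a2 - 1) (a3 - 1) c1 c2 c3)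
  + p ^+ 3 * D3 g (a1 - 1) (a2 - 1) (a3 - 1) c1 c2 c3.
Proof.
have gAC : forall u v : int, g (u - v - 1) = g (u - 1 - v) by move=> u v; rewrite addrAC.
rewrite /D3 /step !gAC; ring.
Qed.

Lemma step_pf3 g q p : PF3 g -> 0 <= q -> 0 <= p -> PF3 (step q p g).
Proof.
move=> H hq hp a1 a2 a3 c1 c2 c3 h1 h2 h3 h4; rewrite step_D3.
have l0 : (a1 <= a2) /\ (a2 <= a3) by split; lia.
have l1 : ((a1 - 1) <= a2) /\ (a2 <= a3) by split; lia.
have l2 : (a1 <= (a2 - 1)) /\ ((a2 - 1) <= a3) by split; lia.
have l3 : (a1 <= a2) /\ (a2 <= (a3 - 1)) by split; lia.
have l4 : ((a1 - 1) <= (a2 - 1)) /\ ((a2 - 1) <= a3) by split; lia.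
have l5 : ((a1 - 1) <= a2) /\ (a2 <= (a3 - 1)) by split; lia.
have l6 : (a1 <= (a2 - 1)) /\ ((a2 - 1) <= (a3 - 1)) by split; lia.
have l7 : ((a1 - 1) <= (a2 - 1)) /\ ((a2 - 1) <= (a3 - 1)) by split; lia.
have q3 : 0 <= q ^+ 3 by rewrite exprn_ge0.
have q2p : 0 <= q ^+ 2 * p by rewrite mulr_ge0 ?exprn_ge0.
have qp2 : 0 <= q * p ^+ 2 by rewrite mulr_ge0 ?exprn_ge0.
have p3 : 0 <= p ^+ 3 by rewrite exprn_ge0.
have d := D3w H.
exact: addr_ge0 (addr_ge0 (addr_ge0 (mulr_ge0 q3 (d a1 a2 a3 c1 c2 c3 (proj1 l0) (proj2 l0) h3 h4)) (mulr_ge0 q2p (addr_ge0 (addr_ge0 (d (a1 - 1) a2 a3 c1 c2 c3 (proj1 l1) (proj2 l1) h3 h4) (d a1 (a2 - 1) a3 c1 c2 c3 (proj1 l2) (proj2 l2) h3 h4)) (d a1 a2 (a3 - 1) c1 c2 c3 (proj1 l3) (proj2 l3) h3 h4)))) (mulr_ge0 qp2 (addr_ge0 (addr_ge0 (d (a1 - 1) (a2 - 1) a3 c1 c2 c3 (proj1 l4) (proj2 l4) h3 h4) (d (a1 - 1) a2 (a3 - 1) c1 c2 c3 (proj1 l5) (proj2 l5) h3 h4)) (d a1 (a2 - 1) (a3 - 1) c1 c2 c3 (proj1 l6) (proj2 l6) h3 h4)))) (mulr_ge0 p3 (d (a1 - 1) (a2 - 1) (a3 - 1) c1 c2 c3 (proj1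 l7) (proj2 l7) h3 h4)).
Qed.

Definition T1 g (a : int) : R := g (a - 1) * g (a) * g (a + 2) - 2 * (g (a - 1) * g (a + 1) * g (a + 1)) + g (a) * g (a) * g (a + 1).

Definition T7 g (a : int) : R := g (a - 2) * g (a) * g (a + 1) - 2 * (g (a - 1) * g (a - 1) * g (a + 1)) + g (a - 1) * g (a) * g (a).

Definition T2 g (a : int) : R := g (a - 2) * g (a) * g (a + 2) - g (a - 1) * g (a - 1) * g (a + 2) - g (a - 1) * g (a) * g (a + 1) + g (a) * g (a) * g (a).

Definition T3 g (a : int) : R := g (a - 2) * g (a) * g (a + 2) - g (a - 2) * g (a + 1) * g (a + 1) - g (a - 1) * g (a) * g (a + 1) + g (a) * g (a) * g (a).

Lemma T1_inst g (H : forall a, 0 <= T1 g a) (x0 xm1 x1 x2 : int) :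
  xm1 = x0 - 1 -> x1 = x0 + 1 -> x2 = x0 + 2 ->
  0 <= g xm1 * g x0 * g x2 - 2 * (g xm1 * g x1 * g x1) + g x0 * g x0 * g x1.

Proof. move=> e0 e1 e2; subst; exact: H. Qed.

Lemma T7_inst g (H : forall a, 0 <= T7 g a) (x0 xm2 xm1 x1 : int) :
  xm2 = x0 - 2 -> xm1 = x0 - 1 -> x1 = x0 + 1 ->
  0 <= g xm2 * g x0 * g x1 - 2 * (g xm1 * g xm1 * g x1) + g xm1 * g x0 * g x0.

Proof. move=> e0 e1 e2; subst; exact: H. Qed.

Record Inv g : Prop := {
  inv_ge0 : forall x, 0 <= g x;
  inv_z : Zprop g;
  inv_pf2 : PF2 g;
  inv_pf3 : PF3 g;
  inv_T1 : forall a, 0 <= T1 g a;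
  inv_T7 : forall a, 0 <= T7 g a;
  inv_T2 : forall a, 0 <= T2 g a;
  inv_T3 : forall a, 0 <= T3 g a }.

Lemma delta_ge0 x : 0 <= delta x.
Proof. by rewrite /delta; case: ifP. Qed.

Lemma delta3 x y z : ~~ [&& x == 0, y == 0 & z == 0] -> delta x * delta y * delta z = 0.
Proof.
rewrite /delta; case: (x == 0); case: (y == 0); case: (z == 0) => h; rewrite ?(mul0r, mulr0) //.
Qed.
Lemma T1_delta (a : int) : 0 <= T1 delta a.
Proof.
rewrite /T1.
have n0 : 0 <= delta (a - 1) * delta (a) * delta (a + 2) by rewrite !mulr_ge0 ?delta_ge0.
have n1 : delta (a - 1) * delta (a + 1) * delta (a + 1) = 0.
  apply: delta3; apply/negP => /and3P[/eqP ? /eqP ? /eqP ?]; lia.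
have n2 : 0 <= delta (a) * delta (a) * delta (a + 1) by rewrite !mulr_ge0 ?delta_ge0.
lra.
Qed.

Lemma T7_delta (a : int) : 0 <= T7 delta a.
Proof.
rewrite /T7.
have n0 : 0 <= delta (a - 2) * delta (a) * delta (a + 1) by rewrite !mulr_ge0 ?delta_ge0.
have n1 : delta (a - 1) * delta (a - 1) * delta (a + 1) = 0.
  apply: delta3; apply/negP => /and3P[/eqP ? /eqP ? /eqP ?]; lia.
have n2 : 0 <= delta (a - 1) * delta (a) * delta (a) by rewrite !mulr_ge0 ?delta_ge0.
lra.
Qed.

Lemma T2_delta (a : int) : 0 <= T2 delta a.
Proof.
rewrite /T2.
have n0 : 0 <= delta (a - 2) * delta (a) * delta (a + 2) by rewrite !mulr_ge0 ?delta_ge0.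
have n1 : delta (a - 1) * delta (a - 1) * delta (a + 2) = 0.
  apply: delta3; apply/negP => /and3P[/eqP ? /eqP ? /eqP ?]; lia.
have n2 : delta (a - 1) * delta (a) * delta (a + 1) = 0.
  apply: delta3; apply/negP => /and3P[/eqP ? /eqP ? /eqP ?]; lia.
have n3 : 0 <= delta (a) * delta (a) * delta (a) by rewrite !mulr_ge0 ?delta_ge0.
lra.
Qed.

Lemma T3_delta (a : int) : 0 <= T3 delta a.
Proof.
rewrite /T3.
have n0 : 0 <= delta (a - 2) * delta (a) * delta (a + 2) by rewrite !mulr_ge0 ?delta_ge0.
have n1 : delta (a - 2) * delta (a + 1) * delta (a + 1) = 0.
  apply: delta3; apply/negP => /and3P[/eqP ? /eqP ? /eqP ?]; lia.
have n2 : delta (a - 1) * delta (a) * delta (a + 1) = 0.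
  apply: delta3; apply/negP => /and3P[/eqP ? /eqP ? /eqP ?]; lia.
have n3 : 0 <= delta (a) * delta (a) * delta (a) by rewrite !mulr_ge0 ?delta_ge0.
lra.
Qed.
Lemma T2_inst g (H : forall a, 0 <= T2 g a) (x0 xm2 xm1 x1 x2 : int) :
  xm2 = x0 - 2 -> xm1 = x0 - 1 -> x1 = x0 + 1 -> x2 = x0 + 2 ->
  0 <= g xm2 * g x0 * g x2 - g xm1 * g xm1 * g x2 - g xm1 * g x0 * g x1 + g x0 * g x0 * g x0.

Proof. move=> e0 e1 e2 e3; subst; exact: H. Qed.

Lemma T3_inst g (H : forall a, 0 <= T3 g a) (x0 xm2 xm1 x1 x2 : int) :
  xm2 = x0 - 2 -> xm1 = x0 - 1 -> x1 = x0 + 1 -> x2 = x0 + 2 ->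
  0 <= g xm2 * g x0 * g x2 - g xm2 * g x1 * g x1 - g xm1 * g x0 * g x1 + g x0 * g x0 * g x0.

Proof. move=> e0 e1 e2 e3; subst; exact: H. Qed.

Lemma cert_T1_1 g (Hi : Inv g) (a : int) :
  0 <= g (a - 2) * g (a) * g (a + 2) - 2 * (g (a - 2) * g (a + 1) * g (a + 1)) + g (a - 1) * g (a - 1) * g (a + 2) - g (a - 1) * g (a) * g (a + 1) + g (a) * g (a) * g (a).
Proof.
have := inv_ge0 Hi (a - 1); rewrite le0r => /orP [/eqP hz | hpos].
{ case: (inv_z Hi hz) => hz'.
  { have zm2 : g (a - 2) = 0 by apply: hz'; lia.
    have zm1 : g (a - 1) = 0 by apply: hz'; lia.
    have p0 : 0 <= g (a) * g (a) * g (a) by rewrite !mulr_ge0 ?(inv_ge0 Hi).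
    rewrite zm2 zm1; lra. }
  { have zm1 : g (a - 1) = 0 by apply: hz'; lia.
    have z0 : g (a) = 0 by apply: hz'; lia.
    have z1 : g (a + 1) = 0 by apply: hz'; lia.
    have z2 : g (a + 2) = 0 by apply: hz'; lia.
    rewrite zm1 z0 z1 z2; lra. }
}
rewrite -(pmulr_rge0 _ hpos).
have f0 : 0 <= g (a - 2) * (g (a - 1) * g (a) * g (a + 2) - 2 * (g (a - 1) * g (a + 1) * g (a + 1)) + g (a) * g (a) * g (a + 1)) := (mulr_ge0 (inv_ge0 Hi _) (@T1_inst g (inv_T1 Hi) (a) (a - 1) (a + 1) (a + 2) ltac:(clear -a; lia) ltac:(clear -a; lia) ltac:(clear -a; lia))).
have f1 : 0 <= g (a - 1) * (g (a) * g (a) * g (a) - g (a) * g (a - 1) * g (a + 1) - g (a - 1) * g (a + 1) * g (a) + g (a - 1) * g (a - 1) * g (a + 2) + g (a - 2) * g (a + 1) * g (a + 1) - g (a - 2) * g (a) * g (a + 2)) := (mulr_ge0 (inv_ge0 Hi _) (@pf3_inst g (inv_pf3 Hi) (a) (a + 1) (a + 2) (0 : int) (1 : int) (2 : int) (a) (a - 1) (a - 2) (a + 1) (a) (a - 1) (a + 2) (a + 1) (a) ltac:(clear -a; lia) ltac:(clear -a; lia) ltac:(clear -a; lia) ltac:(clear -a; lia) ltac:(clear -a; lia) ltac:(clear -a; lia) ltac:(clear -a; lia) ltac:(clear -a; lia) ltac:(clear -a; lia) ltac:(clear -a; lia) ltac:(clear -a; lia) ltac:(clear -a; lia) ltac:(clear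 -a; lia))).
have f2 : 0 <= g (a + 1) * (g (a - 2) * g (a - 1) * g (a + 1) - 2 * (g (a - 2) * g (a) * g (a)) + g (a - 1) * g (a - 1) * g (a)) := (mulr_ge0 (inv_ge0 Hi _) (@T1_inst g (inv_T1 Hi) (a - 1) (a - 2) (a) (a + 1) ltac:(clear -a; lia) ltac:(clear -a; lia) ltac:(clear -a; lia))).
lra.
Qed.

Lemma cert_T1_2 g (Hi : Inv g) (a : int) :
  0 <= g (a - 2) * g (a - 1) * g (a + 2) - 3 * (g (a - 2) * g (a) * g (a + 1)) + 2 * (g (a - 1) * g (a - 1) * g (a + 1)).
Proof.
have := inv_ge0 Hi (a); rewrite le0r => /orP [/eqP hz | hpos].
{ case: (inv_z Hi hz) => hz'.
  { have zm2 : g (a - 2) = 0 by apply: hz'; lia.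
    have zm1 : g (a - 1) = 0 by apply: hz'; lia.
    have z0 : g (a) = 0 by apply: hz'; lia.
    rewrite zm2 zm1 z0; lra. }
  { have z0 : g (a) = 0 by apply: hz'; lia.
    have z1 : g (a + 1) = 0 by apply: hz'; lia.
    have z2 : g (a + 2) = 0 by apply: hz'; lia.
    rewrite z0 z1 z2; lra. }
}
rewrite -(pmulr_rge0 _ hpos).
have f0 : 0 <= g (a + 1) * (g (a - 2) * g (a - 1) * g (a + 1) - 2 * (g (a - 2) * g (a) * g (a)) + g (a - 1) * g (a - 1) * g (a)) := (mulr_ge0 (inv_ge0 Hi _) (@T1_inst g (inv_T1 Hi) (a - 1) (a - 2) (a) (a + 1) ltac:(clear -a; lia) ltac:(clear -a; lia) ltac:(clear -a; lia))).
have f1 : 0 <= g (a - 2) * (g (a - 1) * g (a) * g (a + 2) - 2 * (g (a - 1) * g (a + 1) * g (a + 1)) + g (a) * g (a) * g (a + 1)) := (mulr_ge0 (inv_ge0 Hi _) (@T1_inst g (inv_T1 Hi) (a) (a - 1) (a + 1) (a + 2) ltac:(clear -a; lia) ltac:(clear -a; lia) ltac:(clear -a; lia))).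
lra.
Qed.

Lemma cert_T7_1 g (Hi : Inv g) (a : int) :
  0 <= g (a - 3) * g (a) * g (a + 1) - 3 * (g (a - 2) * g (a - 1) * g (a + 1)) + 2 * (g (a - 2) * g (a) * g (a)).
Proof.
have := inv_ge0 Hi (a - 1); rewrite le0r => /orP [/eqP hz | hpos].
{ case: (inv_z Hi hz) => hz'.
  { have zm3 : g (a - 3) = 0 by apply: hz'; lia.
    have zm2 : g (a - 2) = 0 by apply: hz'; lia.
    have zm1 : g (a - 1) = 0 by apply: hz'; lia.
    rewrite zm3 zm2 zm1; lra. }
  { have zm1 : g (a - 1) = 0 by apply: hz'; lia.
    have z0 : g (a) = 0 by apply: hz'; lia.
    have z1 : g (a + 1) = 0 by apply: hz'; lia.
    rewrite zm1 z0 z1; lra. }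
}
rewrite -(pmulr_rge0 _ hpos).
have f0 : 0 <= g (a + 1) * (g (a - 3) * g (a - 1) * g (a) - 2 * (g (a - 2) * g (a - 2) * g (a)) + g (a - 2) * g (a - 1) * g (a - 1)) := (mulr_ge0 (inv_ge0 Hi _) (@T7_inst g (inv_T7 Hi) (a - 1) (a - 3) (a - 2) (a) ltac:(clear -a; lia) ltac:(clear -a; lia) ltac:(clear -a; lia))).
have f1 : 0 <= g (a - 2) * (g (a - 2) * g (a) * g (a + 1) - 2 * (g (a - 1) * g (a - 1) * g (a + 1)) + g (a - 1) * g (a) * g (a)) := (mulr_ge0 (inv_ge0 Hi _) (@T7_inst g (inv_T7 Hi) (a) (a - 2) (a - 1) (a + 1) ltac:(clear -a; lia) ltac:(clear -a; lia) ltac:(clear -a; lia))).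
lra.
Qed.

Lemma cert_T7_2 g (Hi : Inv g) (a : int) :
  0 <= g (a - 3) * g (a - 1) * g (a + 1) + g (a - 3) * g (a) * g (a) - 2 * (g (a - 2) * g (a - 2) * g (a + 1)) - g (a - 2) * g (a - 1) * g (a) + g (a - 1) * g (a - 1) * g (a - 1).
Proof.
have := inv_ge0 Hi (a); rewrite le0r => /orP [/eqP hz | hpos].
{ case: (inv_z Hi hz) => hz'.
  { have zm3 : g (a - 3) = 0 by apply: hz'; lia.
    have zm2 : g (a - 2) = 0 by apply: hz'; lia.
    have zm1 : g (a - 1) = 0 by apply: hz'; lia.
    have z0 : g (a) = 0 by apply: hz'; lia.
    rewrite zm3 zm2 zm1 z0; lra. }
  { have z0 : g (a) = 0 by apply: hz'; lia.
    have z1 : g (a + 1) = 0 by apply: hz'; lia.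
    have p0 : 0 <= g (a - 1) * g (a - 1) * g (a - 1) by rewrite !mulr_ge0 ?(inv_ge0 Hi).
    rewrite z0 z1; lra. }
}
rewrite -(pmulr_rge0 _ hpos).
have f0 : 0 <= g (a) * (g (a - 1) * g (a - 1) * g (a - 1) - g (a - 1) * g (a - 2) * g (a) - g (a - 2) * g (a) * g (a - 1) + g (a - 2) * g (a - 2) * g (a + 1) + g (a - 3) * g (a) * g (a) - g (a - 3) * g (a - 1) * g (a + 1)) := (mulr_ge0 (inv_ge0 Hi _) (@pf3_inst g (inv_pf3 Hi) (a - 1) (a) (a + 1) (0 : int) (1 : int) (2 : int) (a - 1) (a - 2) (a - 3) (a) (a - 1) (a - 2) (a + 1) (a) (a - 1) ltac:(clear -a; lia) ltac:(clear -a; lia) ltac:(clear -a; lia) ltac:(clear -a; lia) ltac:(clear -a; lia) ltac:(clear -a; lia) ltac:(clear -a; lia) ltac:(clear -a; lia) ltac:(clear -a; lia) ltac:(clear -a; lia) ltac:(clear -a; lia) ltac:(clear -a; lia) ltac:(clear -a; lia))).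
have f1 : 0 <= g (a + 1) * (g (a - 3) * g (a - 1) * g (a) - 2 * (g (a - 2) * g (a - 2) * g (a)) + g (a - 2) * g (a - 1) * g (a - 1)) := (mulr_ge0 (inv_ge0 Hi _) (@T7_inst g (inv_T7 Hi) (a - 1) (a - 3) (a - 2) (a) ltac:(clear -a; lia) ltac:(clear -a; lia) ltac:(clear -a; lia))).
have f2 : 0 <= g (a - 2) * (g (a - 2) * g (a) * g (a + 1) - 2 * (g (a - 1) * g (a - 1) * g (a + 1)) + g (a - 1) * g (a) * g (a)) := (mulr_ge0 (inv_ge0 Hi _) (@T7_inst g (inv_T7 Hi) (a) (a - 2) (a - 1) (a + 1) ltac:(clear -a; lia) ltac:(clear -a; lia) ltac:(clear -a; lia))).
lra.
Qed.

Lemma cert_T2_1 g (Hi : Inv g) (a : int) :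
  0 <= g (a - 3) * g (a) * g (a + 2) - g (a - 2) * g (a - 1) * g (a + 2) - 2 * (g (a - 1) * g (a - 1) * g (a + 1)) + 2 * (g (a - 1) * g (a) * g (a)).
Proof.
have := inv_ge0 Hi (a - 1); rewrite le0r => /orP [/eqP hz | hpos].
{ case: (inv_z Hi hz) => hz'.
  { have zm3 : g (a - 3) = 0 by apply: hz'; lia.
    have zm2 : g (a - 2) = 0 by apply: hz'; lia.
    have zm1 : g (a - 1) = 0 by apply: hz'; lia.
    rewrite zm3 zm2 zm1; lra. }
  { have zm1 : g (a - 1) = 0 by apply: hz'; lia.
    have z0 : g (a) = 0 by apply: hz'; lia.
    have z1 : g (a + 1) = 0 by apply: hz'; lia.
    have z2 : g (a + 2) = 0 by apply: hz'; lia.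
    rewrite zm1 z0 z1 z2; lra. }
}
rewrite -(pmulr_rge0 _ hpos).
have f0 : 0 <= (g (a - 1) * g (a - 1) - g (a - 2) * g (a)) * (g (a) * g (a) - g (a - 1) * g (a + 1)) := (mulr_ge0 (@pf2_inst g (inv_pf2 Hi) (a - 2) (a - 1) (a - 1) (a) ltac:(lia) ltac:(lia) ltac:(lia)) (@pf2_inst g (inv_pf2 Hi) (a - 1) (a) (a) (a + 1) ltac:(lia) ltac:(lia) ltac:(lia))).
have f1 : 0 <= g (a - 2) * (g (a - 2) * g (a) * g (a + 2) - g (a - 1) * g (a - 1) * g (a + 2) - g (a - 1) * g (a) * g (a + 1) + g (a) * g (a) * g (a)) := (mulr_ge0 (inv_ge0 Hi _) (@T2_inst g (inv_T2 Hi) (a) (a - 2) (a - 1) (a + 1) (a + 2) ltac:(clear -a; lia) ltac:(clear -a; lia) ltac:(clear -a; lia) ltac:(clear -a; lia))).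
have f2 : 0 <= g (a + 2) * (g (a - 3) * g (a - 1) * g (a) - 2 * (g (a - 2) * g (a - 2) * g (a)) + g (a - 2) * g (a - 1) * g (a - 1)) := (mulr_ge0 (inv_ge0 Hi _) (@T7_inst g (inv_T7 Hi) (a - 1) (a - 3) (a - 2) (a) ltac:(clear -a; lia) ltac:(clear -a; lia) ltac:(clear -a; lia))).
lra.
Qed.

Lemma cert_T2_2 g (Hi : Inv g) (a : int) :
  0 <= g (a - 3) * g (a - 1) * g (a + 2) + g (a - 3) * g (a) * g (a + 1) - g (a - 2) * g (a - 2) * g (a + 2) - 2 * (g (a - 2) * g (a - 1) * g (a + 1)) - g (a - 2) * g (a) * g (a) + 2 * (g (a - 1) * g (a - 1) * g (a)).
Proof.
have := inv_ge0 Hi (a - 1); rewrite le0r => /orP [/eqP hz | hpos].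
{ case: (inv_z Hi hz) => hz'.
  { have zm3 : g (a - 3) = 0 by apply: hz'; lia.
    have zm2 : g (a - 2) = 0 by apply: hz'; lia.
    have zm1 : g (a - 1) = 0 by apply: hz'; lia.
    rewrite zm3 zm2 zm1; lra. }
  { have zm1 : g (a - 1) = 0 by apply: hz'; lia.
    have z0 : g (a) = 0 by apply: hz'; lia.
    have z1 : g (a + 1) = 0 by apply: hz'; lia.
    have z2 : g (a + 2) = 0 by apply: hz'; lia.
    rewrite zm1 z0 z1 z2; lra. }
}
rewrite -(pmulr_rge0 _ hpos).
have f0 : 0 <= g (a - 2) * (g (a - 2) * g (a) * g (a + 1) - 2 * (g (a - 1) * g (a - 1) * g (a + 1)) + g (a - 1) * g (a) * g (a)) := (mulr_ge0 (inv_ge0 Hi _) (@T7_inst g (inv_T7 Hi) (a) (a - 2) (a - 1) (a + 1) ltac:(clear -a; lia) ltac:(clear -a; lia) ltac:(clear -a; lia))).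
have f1 : 0 <= g (a) * (g (a - 3) * g (a - 1) * g (a + 1) - g (a - 2) * g (a - 2) * g (a + 1) - g (a - 2) * g (a - 1) * g (a) + g (a - 1) * g (a - 1) * g (a - 1)) := (mulr_ge0 (inv_ge0 Hi _) (@T2_inst g (inv_T2 Hi) (a - 1) (a - 3) (a - 2) (a) (a + 1) ltac:(clear -a; lia) ltac:(clear -a; lia) ltac:(clear -a; lia) ltac:(clear -a; lia))).
have f2 : 0 <= (g (a - 2) * g (a - 2) - g (a - 3) * g (a - 1)) * (g (a) * g (a + 1) - g (a - 1) * g (a + 2)) := (mulr_ge0 (@pf2_inst g (inv_pf2 Hi) (a - 3) (a - 2) (a - 2) (a - 1) ltac:(lia) ltac:(lia) ltac:(lia)) (@pf2_inst g (inv_pf2 Hi) (a - 1) (a) (a + 1) (a + 2) ltac:(lia) ltac:(lia) ltac:(lia))).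
lra.
Qed.

Lemma cert_T3_1 g (Hi : Inv g) (a : int) :
  0 <= g (a - 3) * g (a) * g (a + 2) - g (a - 3) * g (a + 1) * g (a + 1) + g (a - 2) * g (a - 1) * g (a + 2) - 2 * (g (a - 2) * g (a) * g (a + 1)) - g (a - 1) * g (a - 1) * g (a + 1) + 2 * (g (a - 1) * g (a) * g (a)).
Proof.
have := inv_ge0 Hi (a); rewrite le0r => /orP [/eqP hz | hpos].
{ case: (inv_z Hi hz) => hz'.
  { have zm3 : g (a - 3) = 0 by apply: hz'; lia.
    have zm2 : g (a - 2) = 0 by apply: hz'; lia.
    have zm1 : g (a - 1) = 0 by apply: hz'; lia.
    have z0 : g (a) = 0 by apply: hz'; lia.
    rewrite zm3 zm2 zm1 z0; lra. }
  { have z0 : g (a) = 0 by apply: hz'; lia.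
    have z1 : g (a + 1) = 0 by apply: hz'; lia.
    have z2 : g (a + 2) = 0 by apply: hz'; lia.
    rewrite z0 z1 z2; lra. }
}
rewrite -(pmulr_rge0 _ hpos).
have f0 : 0 <= g (a + 1) * (g (a - 2) * g (a - 1) * g (a + 1) - 2 * (g (a - 2) * g (a) * g (a)) + g (a - 1) * g (a - 1) * g (a)) := (mulr_ge0 (inv_ge0 Hi _) (@T1_inst g (inv_T1 Hi) (a - 1) (a - 2) (a) (a + 1) ltac:(clear -a; lia) ltac:(clear -a; lia) ltac:(clear -a; lia))).
have f1 : 0 <= (g (a - 1) * g (a) - g (a - 2) * g (a + 1)) * (g (a) * g (a) - g (a - 1) * g (a + 1)) := (mulr_ge0 (@pf2_inst g (inv_pf2 Hi) (a - 2) (a - 1) (a) (a + 1) ltac:(lia) ltac:(lia) ltac:(lia)) (@pf2_inst g (inv_pf2 Hi) (a - 1) (a) (a) (a + 1) ltac:(lia) ltac:(lia) ltac:(lia))).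
have f2 : 0 <= (g (a - 2) * g (a - 1) - g (a - 3) * g (a)) * (g (a + 1) * g (a + 1) - g (a) * g (a + 2)) := (mulr_ge0 (@pf2_inst g (inv_pf2 Hi) (a - 3) (a - 2) (a - 1) (a) ltac:(lia) ltac:(lia) ltac:(lia)) (@pf2_inst g (inv_pf2 Hi) (a) (a + 1) (a + 1) (a + 2) ltac:(lia) ltac:(lia) ltac:(lia))).
have f3 : 0 <= g (a - 2) * (g (a - 1) * g (a) * g (a + 2) - 2 * (g (a - 1) * g (a + 1) * g (a + 1)) + g (a) * g (a) * g (a + 1)) := (mulr_ge0 (inv_ge0 Hi _) (@T1_inst g (inv_T1 Hi) (a) (a - 1) (a + 1) (a + 2) ltac:(clear -a; lia) ltac:(clear -a; lia) ltac:(clear -a; lia))).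
lra.
Qed.

Lemma cert_T3_2 g (Hi : Inv g) (a : int) :
  0 <= g (a - 3) * g (a - 1) * g (a + 2) - g (a - 3) * g (a) * g (a + 1) - 2 * (g (a - 2) * g (a) * g (a)) + 2 * (g (a - 1) * g (a - 1) * g (a)).
Proof.
have := inv_ge0 Hi (a); rewrite le0r => /orP [/eqP hz | hpos].
{ case: (inv_z Hi hz) => hz'.
  { have zm3 : g (a - 3) = 0 by apply: hz'; lia.
    have zm2 : g (a - 2) = 0 by apply: hz'; lia.
    have zm1 : g (a - 1) = 0 by apply: hz'; lia.
    have z0 : g (a) = 0 by apply: hz'; lia.
    rewrite zm3 zm2 zm1 z0; lra. }
  { have z0 : g (a) = 0 by apply: hz'; lia.
    have z1 : g (a + 1) = 0 by apply: hz'; lia.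
    have z2 : g (a + 2) = 0 by apply: hz'; lia.
    rewrite z0 z1 z2; lra. }
}
rewrite -(pmulr_rge0 _ hpos).
have f0 : 0 <= g (a) * (g (a - 2) * g (a - 1) * g (a + 1) - 2 * (g (a - 2) * g (a) * g (a)) + g (a - 1) * g (a - 1) * g (a)) := (mulr_ge0 (inv_ge0 Hi _) (@T1_inst g (inv_T1 Hi) (a - 1) (a - 2) (a) (a + 1) ltac:(clear -a; lia) ltac:(clear -a; lia) ltac:(clear -a; lia))).
have f1 : 0 <= (g (a - 2) * g (a) - g (a - 3) * g (a + 1)) * (g (a) * g (a) - g (a - 1) * g (a + 1)) := (mulr_ge0 (@pf2_inst g (inv_pf2 Hi) (a - 3) (a - 2) (a) (a + 1) ltac:(lia) ltac:(lia) ltac:(lia)) (@pf2_inst g (inv_pf2 Hi) (a - 1) (a) (a) (a + 1) ltac:(lia) ltac:(lia) ltac:(lia))).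
have f2 : 0 <= g (a - 3) * (g (a - 1) * g (a) * g (a + 2) - 2 * (g (a - 1) * g (a + 1) * g (a + 1)) + g (a) * g (a) * g (a + 1)) := (mulr_ge0 (inv_ge0 Hi _) (@T1_inst g (inv_T1 Hi) (a) (a - 1) (a + 1) (a + 2) ltac:(clear -a; lia) ltac:(clear -a; lia) ltac:(clear -a; lia))).
lra.
Qed.

Lemma cert_T6 g (Hi : Inv g) (a : int) :
  0 <= g (a - 3) * g (a) * g (a + 1) - 3 * (g (a - 2) * g (a - 1) * g (a + 1)) + 2 * (g (a - 2) * g (a) * g (a)).
Proof.
have := inv_ge0 Hi (a - 1); rewrite le0r => /orP [/eqP hz | hpos].
{ case: (inv_z Hi hz) => hz'.
  { have zm3 : g (a - 3) = 0 by apply: hz'; lia.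
    have zm2 : g (a - 2) = 0 by apply: hz'; lia.
    have zm1 : g (a - 1) = 0 by apply: hz'; lia.
    rewrite zm3 zm2 zm1; lra. }
  { have zm1 : g (a - 1) = 0 by apply: hz'; lia.
    have z0 : g (a) = 0 by apply: hz'; lia.
    have z1 : g (a + 1) = 0 by apply: hz'; lia.
    rewrite zm1 z0 z1; lra. }
}
rewrite -(pmulr_rge0 _ hpos).
have f0 : 0 <= g (a + 1) * (g (a - 3) * g (a - 1) * g (a) - 2 * (g (a - 2) * g (a - 2) * g (a)) + g (a - 2) * g (a - 1) * g (a - 1)) := (mulr_ge0 (inv_ge0 Hi _) (@T7_inst g (inv_T7 Hi) (a - 1) (a - 3) (a - 2) (a) ltac:(clear -a; lia) ltac:(clear -a; lia) ltac:(clear -a; lia))).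
have f1 : 0 <= g (a - 2) * (g (a - 2) * g (a) * g (a + 1) - 2 * (g (a - 1) * g (a - 1) * g (a + 1)) + g (a - 1) * g (a) * g (a)) := (mulr_ge0 (inv_ge0 Hi _) (@T7_inst g (inv_T7 Hi) (a) (a - 2) (a - 1) (a + 1) ltac:(clear -a; lia) ltac:(clear -a; lia) ltac:(clear -a; lia))).
lra.
Qed.

Lemma step_T1 g q p (Hi : Inv g) (hq : 0 <= q) (hp : 0 <= p) (a : int) :
  0 <= T1 (step q p g) a.
Proof.
rewrite /T1.
have Em1 : step q p g (a - 1) = q * g (a - 1) + p * g (a - 2)
  by rewrite /step; congr (_ + _ * g _); lia.
have E0 : step q p g (a) = q * g (a) + p * g (a - 1)
  by rewrite /step; congr (_ + _ * g _); lia.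
have E1 : step q p g (a + 1) = q * g (a + 1) + p * g (a)
  by rewrite /step; congr (_ + _ * g _); lia.
have E2 : step q p g (a + 2) = q * g (a + 2) + p * g (a + 1)
  by rewrite /step; congr (_ + _ * g _); lia.
rewrite Em1 E0 E1 E2.
have f0 : 0 <= g (a - 1) * g (a) * g (a + 2) - 2 * (g (a - 1) * g (a + 1) * g (a + 1)) + g (a) * g (a) * g (a + 1) := (@T1_inst g (inv_T1 Hi) (a) (a - 1) (a + 1) (a + 2) ltac:(clear -a; lia) ltac:(clear -a; lia) ltac:(clear -a; lia)).
have f3 : 0 <= g (a - 2) * g (a - 1) * g (a + 1) - 2 * (g (a - 2) * g (a) * g (a)) + g (a - 1) * g (a - 1) * g (a) := (@T1_inst g (inv_T1 Hi) (a - 1) (a - 2) (a) (a + 1) ltac:(clear -a; lia) ltac:(clear -a; lia) ltac:(clear -a; lia)).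
have f1 : 0 <= g (a - 2) * g (a) * g (a + 2) - 2 * (g (a - 2) * g (a + 1) * g (a + 1)) + g (a - 1) * g (a - 1) * g (a + 2) - g (a - 1) * g (a) * g (a + 1) + g (a) * g (a) * g (a) := cert_T1_1 Hi a.
have f2 : 0 <= g (a - 2) * g (a - 1) * g (a + 2) - 3 * (g (a - 2) * g (a) * g (a + 1)) + 2 * (g (a - 1) * g (a - 1) * g (a + 1)) := cert_T1_2 Hi a.
have h0 := mulr_ge0 (exprn_ge0 3 hq) f0.
have h1 := mulr_ge0 (mulr_ge0 (exprn_ge0 2 hq) hp) f1.
have h2 := mulr_ge0 (mulr_ge0 hq (exprn_ge0 2 hp)) f2.
have h3 := mulr_ge0 (exprn_ge0 3 hp) f3.
lra.
Qed.

Lemma step_T7 g q p (Hi : Inv g) (hq : 0 <= q) (hp : 0 <= p) (a : int) :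
  0 <= T7 (step q p g) a.
Proof.
rewrite /T7.
have Em2 : step q p g (a - 2) = q * g (a - 2) + p * g (a - 3)
  by rewrite /step; congr (_ + _ * g _); lia.
have Em1 : step q p g (a - 1) = q * g (a - 1) + p * g (a - 2)
  by rewrite /step; congr (_ + _ * g _); lia.
have E0 : step q p g (a) = q * g (a) + p * g (a - 1)
  by rewrite /step; congr (_ + _ * g _); lia.
have E1 : step q p g (a + 1) = q * g (a + 1) + p * g (a)
  by rewrite /step; congr (_ + _ * g _); lia.
rewrite Em2 Em1 E0 E1.
have f0 : 0 <= g (a - 2) * g (a) * g (a + 1) - 2 * (g (a - 1) * g (a - 1) * g (a + 1)) + g (a - 1) * g (a) * g (a) := (@T7_inst g (inv_T7 Hi) (a) (a - 2) (a - 1) (a + 1) ltac:(clear -a; lia) ltac:(clear -a; lia) ltac:(clear -a; lia)).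
have f3 : 0 <= g (a - 3) * g (a - 1) * g (a) - 2 * (g (a - 2) * g (a - 2) * g (a)) + g (a - 2) * g (a - 1) * g (a - 1) := (@T7_inst g (inv_T7 Hi) (a - 1) (a - 3) (a - 2) (a) ltac:(clear -a; lia) ltac:(clear -a; lia) ltac:(clear -a; lia)).
have f1 : 0 <= g (a - 3) * g (a) * g (a + 1) - 3 * (g (a - 2) * g (a - 1) * g (a + 1)) + 2 * (g (a - 2) * g (a) * g (a)) := cert_T7_1 Hi a.
have f2 : 0 <= g (a - 3) * g (a - 1) * g (a + 1) + g (a - 3) * g (a) * g (a) - 2 * (g (a - 2) * g (a - 2) * g (a + 1)) - g (a - 2) * g (a - 1) * g (a) + g (a - 1) * g (a - 1) * g (a - 1) := cert_T7_2 Hi a.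
have h0 := mulr_ge0 (exprn_ge0 3 hq) f0.
have h1 := mulr_ge0 (mulr_ge0 (exprn_ge0 2 hq) hp) f1.
have h2 := mulr_ge0 (mulr_ge0 hq (exprn_ge0 2 hp)) f2.
have h3 := mulr_ge0 (exprn_ge0 3 hp) f3.
lra.
Qed.

Lemma step_T2 g q p (Hi : Inv g) (hq : 0 <= q) (hp : 0 <= p) (a : int) :
  0 <= T2 (step q p g) a.
Proof.
rewrite /T2.
have Em2 : step q p g (a - 2) = q * g (a - 2) + p * g (a - 3)
  by rewrite /step; congr (_ + _ * g _); lia.
have Em1 : step q p g (a - 1) = q * g (a - 1) + p * g (a - 2)
  by rewrite /step; congr (_ + _ * g _); lia.
have E0 : step q p g (a) = q * g (a) + p * g (a - 1)
  by rewrite /step; congr (_ + _ * g _); lia.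
have E1 : step q p g (a + 1) = q * g (a + 1) + p * g (a)
  by rewrite /step; congr (_ + _ * g _); lia.
have E2 : step q p g (a + 2) = q * g (a + 2) + p * g (a + 1)
  by rewrite /step; congr (_ + _ * g _); lia.
rewrite Em2 Em1 E0 E1 E2.
have f0 : 0 <= g (a - 2) * g (a) * g (a + 2) - g (a - 1) * g (a - 1) * g (a + 2) - g (a - 1) * g (a) * g (a + 1) + g (a) * g (a) * g (a) := (@T2_inst g (inv_T2 Hi) (a) (a - 2) (a - 1) (a + 1) (a + 2) ltac:(clear -a; lia) ltac:(clear -a; lia) ltac:(clear -a; lia) ltac:(clear -a; lia)).
have f3 : 0 <= g (a - 3) * g (a - 1) * g (a + 1) - g (a - 2) * g (a - 2) * g (a + 1) - g (a - 2) * g (a - 1) * g (a) + g (a - 1) * g (a - 1) * g (a - 1) := (@T2_inst g (inv_T2 Hi) (a - 1) (a - 3) (a - 2) (a) (a + 1) ltac:(clear -a; lia) ltac:(clear -a; lia) ltac:(clear -a; lia) ltac:(clear -a; lia)).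
have f1 : 0 <= g (a - 3) * g (a) * g (a + 2) - g (a - 2) * g (a - 1) * g (a + 2) - 2 * (g (a - 1) * g (a - 1) * g (a + 1)) + 2 * (g (a - 1) * g (a) * g (a)) := cert_T2_1 Hi a.
have f2 : 0 <= g (a - 3) * g (a - 1) * g (a + 2) + g (a - 3) * g (a) * g (a + 1) - g (a - 2) * g (a - 2) * g (a + 2) - 2 * (g (a - 2) * g (a - 1) * g (a + 1)) - g (a - 2) * g (a) * g (a) + 2 * (g (a - 1) * g (a - 1) * g (a)) := cert_T2_2 Hi a.
have h0 := mulr_ge0 (exprn_ge0 3 hq) f0.
have h1 := mulr_ge0 (mulr_ge0 (exprn_ge0 2 hq) hp) f1.
have h2 := mulr_ge0 (mulr_ge0 hq (exprn_ge0 2 hp)) f2.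
have h3 := mulr_ge0 (exprn_ge0 3 hp) f3.
lra.
Qed.

Lemma step_T3 g q p (Hi : Inv g) (hq : 0 <= q) (hp : 0 <= p) (a : int) :
  0 <= T3 (step q p g) a.
Proof.
rewrite /T3.
have Em2 : step q p g (a - 2) = q * g (a - 2) + p * g (a - 3)
  by rewrite /step; congr (_ + _ * g _); lia.
have Em1 : step q p g (a - 1) = q * g (a - 1) + p * g (a - 2)
  by rewrite /step; congr (_ + _ * g _); lia.
have E0 : step q p g (a) = q * g (a) + p * g (a - 1)
  by rewrite /step; congr (_ + _ * g _); lia.
have E1 : step q p g (a + 1) = q * g (a + 1) + p * g (a)
  by rewrite /step; congr (_ + _ * g _); lia.
have E2 : step q p g (a + 2) = q * g (a + 2) + p * g (a + 1)
  by rewrite /step; congr (_ + _ * g _); lia.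
rewrite Em2 Em1 E0 E1 E2.
have f0 : 0 <= g (a - 2) * g (a) * g (a + 2) - g (a - 2) * g (a + 1) * g (a + 1) - g (a - 1) * g (a) * g (a + 1) + g (a) * g (a) * g (a) := (@T3_inst g (inv_T3 Hi) (a) (a - 2) (a - 1) (a + 1) (a + 2) ltac:(clear -a; lia) ltac:(clear -a; lia) ltac:(clear -a; lia) ltac:(clear -a; lia)).
have f3 : 0 <= g (a - 3) * g (a - 1) * g (a + 1) - g (a - 3) * g (a) * g (a) - g (a - 2) * g (a - 1) * g (a) + g (a - 1) * g (a - 1) * g (a - 1) := (@T3_inst g (inv_T3 Hi) (a - 1) (a - 3) (a - 2) (a) (a + 1) ltac:(clear -a; lia) ltac:(clear -a; lia) ltac:(clear -a; lia) ltac:(clear -a; lia)).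
have f1 : 0 <= g (a - 3) * g (a) * g (a + 2) - g (a - 3) * g (a + 1) * g (a + 1) + g (a - 2) * g (a - 1) * g (a + 2) - 2 * (g (a - 2) * g (a) * g (a + 1)) - g (a - 1) * g (a - 1) * g (a + 1) + 2 * (g (a - 1) * g (a) * g (a)) := cert_T3_1 Hi a.
have f2 : 0 <= g (a - 3) * g (a - 1) * g (a + 2) - g (a - 3) * g (a) * g (a + 1) - 2 * (g (a - 2) * g (a) * g (a)) + 2 * (g (a - 1) * g (a - 1) * g (a)) := cert_T3_2 Hi a.
have h0 := mulr_ge0 (exprn_ge0 3 hq) f0.
have h1 := mulr_ge0 (mulr_ge0 (exprn_ge0 2 hq) hp) f1.
have h2 := mulr_ge0 (mulr_ge0 hq (exprn_ge0 2 hp)) f2.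
have h3 := mulr_ge0 (exprn_ge0 3 hp) f3.
lra.
Qed.

Lemma pf2_delta : PF2 delta.
Proof.
move=> w x y z e hx hy.
have -> : delta w * delta z = 0.
  rewrite /delta; case: (w =P 0) => hw; case: (z =P 0) => hz; rewrite ?mul0r ?mulr0 //.
  lia.
by rewrite mulr_ge0 ?delta_ge0.
Qed.

Lemma pf3_delta : PF3 delta.
Proof.
move=> a1 a2 a3 c1 c2 c3 h1 h2 h3 h4; rewrite /D3.
have n0 : 0 <= delta (a1 - c1) * delta (a2 - c2) * delta (a3 - c3) by rewrite !mulr_ge0 ?delta_ge0.
have n1 : delta (a1 - c1) * delta (a2 - c3) * delta (a3 - c2) = 0.
  apply: delta3; apply/negP => /and3P[/eqP ? /eqP ? /eqP ?]; lia.
have n2 : delta (a1 - c2) * delta (a2 - c1) * delta (a3 - c3) = 0.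
  apply: delta3; apply/negP => /and3P[/eqP ? /eqP ? /eqP ?]; lia.
have n3 : delta (a1 - c2) * delta (a2 - c3) * delta (a3 - c1) = 0.
  apply: delta3; apply/negP => /and3P[/eqP ? /eqP ? /eqP ?]; lia.
have n4 : delta (a1 - c3) * delta (a2 - c1) * delta (a3 - c2) = 0.
  apply: delta3; apply/negP => /and3P[/eqP ? /eqP ? /eqP ?]; lia.
have n5 : delta (a1 - c3) * delta (a2 - c2) * delta (a3 - c1) = 0.
  apply: delta3; apply/negP => /and3P[/eqP ? /eqP ? /eqP ?]; lia.
lra.
Qed.

Lemma z_delta : Zprop delta.
Proof.
move=> x; rewrite /delta; case: (x =P 0) => hx; first by move=> /eqP; rewrite oner_eq0.
move=> _; case: (ltrP x 0) => hs; [left|right] => y hy; case: (y =P 0) => // ?; lia.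
Qed.

Lemma Inv_delta : Inv delta.
Proof.
split; [exact: delta_ge0 | exact: z_delta | exact: pf2_delta | exact: pf3_delta
       | exact: T1_delta | exact: T7_delta | exact: T2_delta | exact: T3_delta].
Qed.

Lemma Inv_step g q p : Inv g -> 0 <= q -> 0 <= p -> Inv (step q p g).
Proof.
move=> Hi hq hp; split.
- exact: step_ge0 (inv_ge0 Hi) hq hp.
- exact: step_z (inv_ge0 Hi) (inv_z Hi) hq hp.
- exact: step_pf2 (inv_ge0 Hi) (inv_pf2 Hi) hq hp.
- exact: step_pf3 (inv_pf3 Hi) hq hp.
- exact: step_T1 Hi hq hp.
- exact: step_T7 Hi hq hp.
- exact: step_T2 Hi hq hp.
- exact: step_T3 Hi hq hp.
Qed.

Lemma Inv_poibin (m : nat) (p : 'I_m -> R) : (forall i, 0 <= p i <= 1) -> Inv (poibin p).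
Proof.
elim: m p => [|m IH] p hp.
  have -> : poibin p = delta by apply: functional_extensionality => k; rewrite poibin0.
  exact: Inv_delta.
have -> : poibin p = step (1 - p ord0) (p ord0) (poibin (fun j => p (lift ord0 j))).
  by apply: functional_extensionality => k; rewrite poibin_rec.
have /andP[h0 h1] := hp ord0.
apply: Inv_step; first (apply: IH => j; exact: hp).
- by rewrite subr_ge0.
- exact: h0.
Qed.

End Core.

Theorem corollaryA3 (R : realFieldType) (m : nat) (hm : (1 <= m)%N)
    (p : 'I_m -> R) (hp : forall i, 0 <= p i <= 1) (k : int) :
  let g := poibin p in
  0 <= g k ^+ 2 * g (k + 1) - 2 * g (k + 1) ^+ 2 * g (k - 1)
             + g (k + 2) * g k * g (k - 1) /\
      0 <= g k ^+ 3 - g (k - 1) * g k * g (k + 1) - g (k - 1) ^+ 2 * g (k + 2)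
             + g (k - 2) * g k * g (k + 2) /\
      0 <= g k ^+ 3 - g (k - 1) * g k * g (k + 1) - g (k + 1) ^+ 2 * g (k - 2)
             + g (k - 2) * g k * g (k + 2) /\
      0 <= 2 * g k ^+ 3 - 3 * g (k - 1) * g k * g (k + 1)
             + g (k - 1) ^+ 2 * g (k + 2) /\
      0 <= 2 * g k ^+ 3 - 3 * g (k - 1) * g k * g (k + 1)
             + g (k + 1) ^+ 2 * g (k - 2) /\
      0 <= 2 * g k ^+ 2 * g (k - 2) - 3 * g (k - 2) * g (k - 1) * g (k + 1)
             + g (k + 1) * g k * g (k - 3).
Proof.
move=> g.
have Hi : Inv g := Inv_poibin hp.
have h1 := inv_T1 Hi k; rewrite /T1 in h1.
have h2 := inv_T2 Hi k; rewrite /T2 in h2.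
have h3 := inv_T3 Hi k; rewrite /T3 in h3.
have h6 := cert_T6 Hi k.
have hd := @pf3_inst _ g (inv_pf3 Hi) k (k + 1) (k + 2) (0 : int) 1 2 k (k - 1) (k - 2) (k + 1) k (k - 1) (k + 2) (k + 1) k
  ltac:(lia) ltac:(lia) ltac:(lia) ltac:(lia) ltac:(lia) ltac:(lia) ltac:(lia) ltac:(lia) ltac:(lia)
  ltac:(lia) ltac:(lia) ltac:(lia) ltac:(lia).
split; first lra.
split; first lra.
split; first lra.
split; first lra.
split; lra.
Qed.
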